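(* Let $p>0$, $\lambda>0$, and let $u=u(r)$, $r=|x|$, be a radial solution with $0<u<1$ of \[ \Delta u+\frac{\lambda}{(1-u)^p}=0 \ \text{ in } |x|<1\subset\mathbb{R}^n,\qquad u=0 \text{ on } |x|=1. \] Suppose $u$ is singular, i.e. the problem \[ \omega''+\frac{n-1}{r}\omega'+\lambda\frac{p}{(1-u)^{p+1}}\omega=0\quad(0<r<1),\qquad \omega'(0)=\omega(1)=0 \] has a nontrivial solution. Then \[ \omega(r)=ru'(r)-\frac{2}{p+1}u(r)+\frac{2}{p+1} \] is a solution of this problem. *)

(* Defs.v *)
From Stdlib Require Import Reals Lra.
From Coquelicot Require Import Coquelicot.
Open Scope R_scope.

(* In radial form:
     u'' + (n-1)/r u' + lambda/(1-u)^p = 0   (0 < r < 1),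
   u'(0) = 0 (and u' -> 0 as r -> 0+, i.e. u is C^1 at the origin),
   u continuous up to r = 1 with u(1) = 0.  Values of u outside [0,1]
   are irrelevant. *)
Definition radial_solution (n : nat) (p lam : R) (u : R -> R) : Prop :=
  (forall r, 0 <= r < 1 -> 0 < u r < 1) /\
  (forall r, 0 < r < 1 -> ex_derive u r /\ ex_derive (Derive u) r) /\
  (forall r, 0 < r < 1 ->
     Derive_n u 2 r + (INR n - 1) / r * Derive u r
       + lam / Rpower (1 - u r) p = 0) /\
  filterlim (fun h => (u h - u 0) / h) (at_right 0) (locally 0) /\
  filterlim (Derive u) (at_right 0) (locally 0) /\
  filterlim u (at_left 1) (locally 0) /\ u 1 = 0.

Definition lin_solution (n : nat) (p lam : R) (u w : R -> R) : Prop :=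
  (forall r, 0 < r < 1 -> ex_derive w r /\ ex_derive (Derive w) r) /\
  (forall r, 0 < r < 1 ->
     Derive_n w 2 r + (INR n - 1) / r * Derive w r
       + lam * p / Rpower (1 - u r) (p + 1) * w r = 0) /\
  filterlim (fun h => (w h - w 0) / h) (at_right 0) (locally 0) /\
  filterlim w (at_left 1) (locally 0).

Definition nontrivial (w : R -> R) : Prop :=
  exists r, 0 < r < 1 /\ w r <> 0.

(* Main.v *)
Require Import Defs.
From Stdlib Require Import Reals Lra.
From Coquelicot Require Import Coquelicot.
Open Scope R_scope.

Lemma DDn2 (f : R -> R) r : Derive_n f 2 r = Derive (Derive f) r.
Proof. reflexivity. Qed.

Lemma derive_invP (u : R -> R) (p r : R) :
  ex_derive u r -> 0 < 1 - u r ->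
  is_derive (fun t => / Rpower (1 - u t) p) r
    (p * Derive u r / (Rpower (1 - u r) p * (1 - u r))).
Proof.
  intros Hd Hpos.
  apply is_derive_ext with (fun t => exp (- p * ln (1 - u t))).
  { intros t. unfold Rpower. rewrite <- exp_Ropp. f_equal. ring. }
  auto_derive.
  - split; [exact Hd|split; [lra|exact I]].
  - unfold Rpower.
    replace (1 + - u r) with (1 - u r) by ring.
    replace (- p * ln (1 - u r)) with (- (p * ln (1 - u r))) by ring.
    rewrite exp_Ropp. change (Derive (fun x => u x) r) with (Derive u r).
    field. split; [lra|]. apply Rgt_not_eq, exp_pos.
Qed.

Definition om (p : R) (u : R -> R) (r : R) := r * Derive u r - 2/(p+1) * u r + 2/(p+1).
Definition ginv (p : R) (u : R -> R) (t : R) := / Rpower (1 - u t) p.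
Definition Hf (n : nat) (p lam : R) (u : R -> R) (r : R) :=
  (1 - 2/(p+1) - (INR n - 1)) * Derive u r - lam * (r * ginv p u r).

Lemma loc01 r : 0 < r < 1 -> locally r (fun t => 0 < t < 1).
Proof.
  intros Hr. assert (He : 0 < Rmin r (1 - r)) by (apply Rmin_pos; lra).
  exists (mkposreal _ He). intros t Ht.
  unfold ball in Ht; simpl in Ht; unfold AbsRing_ball, abs, minus, plus, opp in Ht; simpl in Ht.
  apply Rabs_lt_between in Ht. destruct Ht as [H1 H2].
  pose proof (Rmin_l r (1-r)). pose proof (Rmin_r r (1-r)). lra.
Qed.

Lemma om_deriv n p lam u r : 0 < p -> radial_solution n p lam u -> 0 < r < 1 ->
  is_derive (om p u) r (Hf n p lam u r).
Proof.
  intros hp [H01 [Hd [Hode _]]] Hr.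
  destruct (Hd r Hr) as [Hd1 Hd2]. pose proof (Hode r Hr) as E.
  rewrite DDn2 in E.
  pose proof (H01 r (conj (Rlt_le _ _ (proj1 Hr)) (proj2 Hr))) as Hu.
  unfold om. auto_derive.
  - repeat split; auto.
  - unfold Hf, ginv. change (Derive (fun x => u x) r) with (Derive u r).
    assert (Hpow : 0 < Rpower (1 - u r) p) by (unfold Rpower; apply exp_pos).
    assert (Eq : Derive (Derive u) r = - ((INR n - 1) / r * Derive u r) - lam / Rpower (1 - u r) p) by lra.
    change (Derive (fun x => Derive u x) r) with (Derive (Derive u) r). rewrite Eq. field. lra.
Qed.

Lemma om_D n p lam u r : 0 < p -> radial_solution n p lam u -> 0 < r < 1 ->
  Derive (om p u) r = Hf n p lam u r.
Proof. intros; apply is_derive_unique, om_deriv; auto. Qed.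

Lemma om_deriv2 n p lam u r : 0 < p -> radial_solution n p lam u -> 0 < r < 1 ->
  is_derive (Derive (om p u)) r
   ((1 - 2/(p+1) - (INR n - 1)) * Derive (Derive u) r
     - lam * (ginv p u r + r * (p * Derive u r / (Rpower (1 - u r) p * (1 - u r))))).
Proof.
  intros hp hu Hr.
  apply is_derive_ext_loc with (Hf n p lam u).
  { apply filter_imp with (2 := loc01 r Hr). intros t Ht. symmetry. apply om_D; auto. }
  pose proof hu as [H01 [Hd [Hode _]]].
  destruct (Hd r Hr) as [Hd1 Hd2].
  pose proof (H01 r (conj (Rlt_le _ _ (proj1 Hr)) (proj2 Hr))) as Hu.
  pose proof (derive_invP u p r Hd1 ltac:(lra)) as Hg.
  unfold Hf. auto_derive.
  - repeat split; auto. exists (p * Derive u r / (Rpower (1 - u r) p * (1 - u r))). exact Hg.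
  - change (Derive (fun x => ginv p u x) r) with (Derive (fun t : R_AbsRing => / Rpower (1 - u t) p) r). rewrite (is_derive_unique _ _ _ Hg).
    change (Derive (fun x => Derive u x) r) with (Derive (Derive u) r).
    ring.
Qed.

Lemma om_ode n p lam u r : 0 < p -> radial_solution n p lam u -> 0 < r < 1 ->
  ex_derive (om p u) r /\ ex_derive (Derive (om p u)) r /\
  Derive_n (om p u) 2 r + (INR n - 1) / r * Derive (om p u) r
       + lam * p / Rpower (1 - u r) (p + 1) * om p u r = 0.
Proof.
  intros hp hu Hr.
  pose proof (om_deriv2 n p lam u r hp hu Hr) as H2.
  split; [eexists; apply (om_deriv n p lam); eauto|].
  split; [eexists; exact H2|].
  rewrite DDn2, (is_derive_unique _ _ _ H2), (om_D n p lam); auto.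
  pose proof hu as [H01 [Hd [Hode _]]].
  pose proof (Hode r Hr) as E. rewrite DDn2 in E.
  pose proof (H01 r (conj (Rlt_le _ _ (proj1 Hr)) (proj2 Hr))) as Hu.
  assert (Hpow : 0 < Rpower (1 - u r) p) by (unfold Rpower; apply exp_pos).
  assert (Eq : Derive (Derive u) r = - ((INR n - 1) / r * Derive u r) - lam / Rpower (1 - u r) p) by lra.
  rewrite Eq, Rpower_plus, Rpower_1 by lra.
  unfold Hf, ginv, om. field. lra.
Qed.

Lemma ballR (x e y : R) : ball x e y <-> Rabs (y - x) < e.
Proof. reflexivity. Qed.

Definition small0 (f : R -> R) := forall eps, 0 < eps -> exists d, 0 < d /\ forall h, 0 < h < d -> Rabs (f h) < eps.

Lemma small0_of (f : R -> R) : filterlim f (at_right 0) (locally 0) -> small0 f.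
Proof.
  intros H eps He.
  destruct (proj1 (filterlim_locally f 0) H (mkposreal eps He)) as [d Hd].
  exists d. split; [apply cond_pos|]. intros h Hh.
  assert (Hb : ball 0 d h) by (apply ballR; rewrite Rminus_0_r, Rabs_pos_eq; lra).
  specialize (Hd h Hb (proj1 Hh)). apply (proj1 (ballR _ _ _)) in Hd. simpl in Hd. rewrite Rminus_0_r in Hd. exact Hd.
Qed.

Lemma rq_small (f : R -> R) : filterlim (fun h => (f h - f 0) / h) (at_right 0) (locally 0) ->
  forall eps, 0 < eps -> exists d, 0 < d /\ forall h, 0 < h < d -> Rabs (f h - f 0) <= eps * h.
Proof.
  intros H eps He. destruct (small0_of _ H eps He) as [d [Hd H']].
  exists d; split; auto. intros h Hh. specialize (H' h Hh).
  replace (f h - f 0) with ((f h - f 0) / h * h) by (field; lra).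
  rewrite Rabs_mult, (Rabs_pos_eq h) by lra. apply Rmult_le_compat_r; lra.
Qed.

Lemma om_at0 n p lam u : 0 < p -> radial_solution n p lam u ->
  filterlim (fun h => (om p u h - om p u 0) / h) (at_right 0) (locally 0).
Proof.
  intros hp [H01 [Hdd [Hode [Hu0 [Hq0 _]]]]].
  apply filterlim_locally. intros eps.
  destruct (small0_of _ Hq0 (eps/2) ltac:(pose proof (cond_pos eps); lra)) as [d1 [Hd1 H1]].
  set (k := 2/(p+1)).
  assert (Hk : 0 < k) by (unfold k; apply Rdiv_lt_0_compat; lra).
  destruct (small0_of _ Hu0 (eps/2/k)) as [d2 [Hd2 H2]].
  { apply Rdiv_lt_0_compat; auto. pose proof (cond_pos eps); lra. }
  assert (Hd : 0 < Rmin d1 d2) by (apply Rmin_pos; lra).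
  exists (mkposreal _ Hd). intros h Hb Hh. apply (proj1 (ballR _ _ _)) in Hb. simpl in Hb.
  rewrite Rminus_0_r, Rabs_pos_eq in Hb by lra.
  pose proof (Rmin_l d1 d2). pose proof (Rmin_r d1 d2).
  specialize (H1 h ltac:(lra)). specialize (H2 h ltac:(lra)).
  apply ballR. rewrite Rminus_0_r.
  replace ((om p u h - om p u 0) / h) with (Derive u h - k * ((u h - u 0)/h)).
  2:{ unfold om. fold k. field. lra. }
  idtac.
  eapply Rle_lt_trans. apply Rabs_triang. rewrite Rabs_Ropp, Rabs_mult, (Rabs_pos_eq k) by lra.
  replace (pos eps) with (eps/2 + k * (eps/2/k)) by (field; lra).
  apply Rplus_lt_compat; auto. apply Rmult_lt_compat_l; auto.
Qed.

Lemma mvt (f df : R -> R) (x y : R) : x <= y ->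
  (forall t, x <= t <= y -> is_derive f t (df t)) ->
  exists c, x <= c <= y /\ f y - f x = df c * (y - x).
Proof.
  intros Hxy Hd.
  destruct (MVT_gen f x y df) as [c [Hc E]].
  - intros t Ht. rewrite Rmin_left, Rmax_right in Ht by lra. apply Hd; lra.
  - intros t Ht. rewrite Rmin_left, Rmax_right in Ht by lra.
    apply continuity_pt_filterlim. apply (ex_derive_continuous f t).
    exists (df t). apply Hd; lra.
  - rewrite Rmin_left, Rmax_right in Hc by lra. exists c; split; auto.
Qed.

Lemma wr_deriv (m : nat) (b A B : R -> R) r :
  0 < r ->
  ex_derive A r -> ex_derive (Derive A) r ->
  ex_derive B r -> ex_derive (Derive B) r ->
  Derive (Derive A) r + INR m / r * Derive A r + b r * A r = 0 ->
  Derive (Derive B) r + INR m / r * Derive B r + b r * B r = 0 ->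
  is_derive (fun t => t ^ m * (A t * Derive B t - Derive A t * B t)) r 0.
Proof.
  intros Hr HA1 HA2 HB1 HB2 EA EB.
  auto_derive.
  - repeat split; auto.
  - change (Derive (fun x => Derive A x) r) with (Derive (Derive A) r).
    change (Derive (fun x => Derive B x) r) with (Derive (Derive B) r).
    change (Derive (fun x => A x) r) with (Derive A r).
    change (Derive (fun x => B x) r) with (Derive B r).
    assert (EA' : Derive (Derive A) r = - (INR m / r * Derive A r) - b r * A r) by lra.
    assert (EB' : Derive (Derive B) r = - (INR m / r * Derive B r) - b r * B r) by lra.
    rewrite EA', EB'.
    destruct m as [|k].
    + simpl. field. lra.
    + simpl pred. replace (r ^ S k) with (r * r ^ k) by reflexivity. field. lra.
Qed.

Lemma energy_bound z d a b K : Rabs a <= K -> Rabs b <= K ->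
  Rabs (2 * z * d + 2 * d * (- (a * d) - b * z)) <= (1 + 3 * K) * (z ^ 2 + d ^ 2).
Proof.
  intros Ha Hb.
  replace (2 * z * d + 2 * d * (- (a * d) - b * z)) with (2 * z * d * (1 - b) + (- 2 * a) * d ^ 2) by ring.
  eapply Rle_trans; [apply Rabs_triang|].
  rewrite (Rabs_mult (2 * z * d) (1 - b)), (Rabs_mult (-2 * a) (d ^ 2)).
  assert (H1 : Rabs (2 * z * d) <= z ^ 2 + d ^ 2).
  { rewrite !Rabs_mult, (Rabs_pos_eq 2) by lra.
    pose proof (Rabs_pos z); pose proof (Rabs_pos d).
    rewrite <- (pow2_abs z), <- (pow2_abs d). pose proof (pow2_ge_0 (Rabs z - Rabs d)). nra. }
  assert (H2 : Rabs (1 - b) <= 1 + K).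
  { eapply Rle_trans; [apply Rabs_triang|]. rewrite Rabs_R1, Rabs_Ropp. lra. }
  assert (H3 : Rabs (-2 * a) <= 2 * K).
  { rewrite Rabs_mult, (Rabs_left (-2)) by lra. lra. }
  rewrite (Rabs_pos_eq (d ^ 2)) by (apply pow2_ge_0).
  pose proof (Rabs_pos (2 * z * d)). pose proof (Rabs_pos (1 - b)). pose proof (Rabs_pos (-2 * a)).
  pose proof (pow2_ge_0 z). pose proof (pow2_ge_0 d).
  assert (Rabs (2 * z * d) * Rabs (1 - b) <= (z ^ 2 + d ^ 2) * (1 + K)) by (apply Rmult_le_compat; auto).
  assert (Rabs (-2 * a) * d ^ 2 <= 2 * K * d ^ 2) by (apply Rmult_le_compat_r; auto).
  assert (0 <= K) by (pose proof (Rabs_pos a); lra).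
  assert (0 <= K * z ^ 2) by (apply Rmult_le_pos; lra).
  lra.
Qed.

Lemma uniq (z dz ddz a b : R -> R) lo hi K r0 r :
  lo <= r0 <= hi -> lo <= r <= hi ->
  (forall x, lo <= x <= hi -> is_derive z x (dz x) /\ is_derive dz x (ddz x) /\
      ddz x = - (a x * dz x) - b x * z x /\ Rabs (a x) <= K /\ Rabs (b x) <= K) ->
  z r0 = 0 -> dz r0 = 0 -> z r = 0.
Proof.
  intros H0 Hr Hx Z0 D0.
  set (L := 1 + 3 * K).
  set (E := fun x => z x ^ 2 + dz x ^ 2).
  assert (HE : forall x, lo <= x <= hi -> is_derive E x (2 * z x * dz x + 2 * dz x * ddz x)).
  { intros x Hxx. destruct (Hx x Hxx) as [D1 [D2 _]]. unfold E.
    apply is_derive_ext with (fun t => z t * z t + dz t * dz t).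
    { intros t; simpl; ring. }
    auto_derive.
    - repeat split; try (eexists; eassumption).
    - change (Derive (fun x => z x) x) with (Derive z x).
      change (Derive (fun x => dz x) x) with (Derive dz x).
      rewrite (is_derive_unique _ _ _ D1), (is_derive_unique _ _ _ D2). ring. }
  assert (HB : forall x, lo <= x <= hi -> Rabs (2 * z x * dz x + 2 * dz x * ddz x) <= L * E x).
  { intros x Hxx. destruct (Hx x Hxx) as [_ [_ [Eq [Ha Hb]]]]. rewrite Eq.
    apply energy_bound; auto. }
  assert (Epos : forall x, 0 <= E x) by (intros; unfold E; pose proof (pow2_ge_0 (z x)); pose proof (pow2_ge_0 (dz x)); lra).
  assert (E0 : E r0 = 0) by (unfold E; rewrite Z0, D0; ring).
  assert (Er : E r = 0).
  { destruct (Rle_or_lt r0 r) as [Hle|Hlt].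
    - set (F := fun x => E x * exp (- L * x)).
      destruct (mvt F (fun x => (2 * z x * dz x + 2 * dz x * ddz x) * exp (- L * x) + E x * (- L * exp (- L * x))) r0 r Hle) as [c [Hc Eq]].
      { intros t Ht. unfold F. pose proof (HE t ltac:(lra)) as Dt.
        auto_derive.
        - eexists; exact Dt.
        - change (Derive (fun x => E x) t) with (Derive E t).
          rewrite (is_derive_unique _ _ _ Dt). ring. }
      assert (Hcc : lo <= c <= hi) by lra.
      pose proof (HB c Hcc) as Bc. apply Rabs_le_between in Bc.
      pose proof (exp_pos (- L * c)). pose proof (exp_pos (- L * r)).
      unfold F in Eq. rewrite E0 in Eq.
      assert (E r * exp (- L * r) <= 0).
      { assert (((2 * z c * dz c + 2 * dz c * ddz c) - L * E c) * exp (- L * c) <= 0).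
        { apply Rmult_le_0_r; lra. }
        assert (((2 * z c * dz c + 2 * dz c * ddz c) * exp (- L * c) + E c * (- L * exp (- L * c))) * (r - r0) <= 0).
        { apply Rmult_le_0_r; [nra|lra]. }
        lra. }
      pose proof (Epos r). nra.
    - set (F := fun x => E x * exp (L * x)).
      destruct (mvt F (fun x => (2 * z x * dz x + 2 * dz x * ddz x) * exp (L * x) + E x * (L * exp (L * x))) r r0 (Rlt_le _ _ Hlt)) as [c [Hc Eq]].
      { intros t Ht. unfold F. pose proof (HE t ltac:(lra)) as Dt.
        auto_derive.
        - eexists; exact Dt.
        - change (Derive (fun x => E x) t) with (Derive E t).
          rewrite (is_derive_unique _ _ _ Dt). ring. }
      assert (Hcc : lo <= c <= hi) by lra.
      pose proof (HB c Hcc) as Bc. apply Rabs_le_between in Bc.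
      pose proof (exp_pos (L * c)). pose proof (exp_pos (L * r)).
      unfold F in Eq. rewrite E0 in Eq.
      assert (E r * exp (L * r) <= 0).
      { assert (0 <= ((2 * z c * dz c + 2 * dz c * ddz c) + L * E c) * exp (L * c)).
        { apply Rmult_le_pos; lra. }
        assert (0 <= ((2 * z c * dz c + 2 * dz c * ddz c) * exp (L * c) + E c * (L * exp (L * c))) * (r0 - r)).
        { apply Rmult_le_pos; [nra|lra]. }
        lra. }
      pose proof (Epos r). nra. }
  unfold E in Er. pose proof (pow2_ge_0 (z r)). pose proof (pow2_ge_0 (dz r)).
  assert (z r ^ 2 = 0) by lra. nra.
Qed.

Lemma W_zero (m : nat) (A B : R -> R) (M : R) :
  (exists d, 0 < d /\ forall r, 0 < r < d -> Rabs (A r) <= M) ->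
  small0 (Derive A) ->
  filterlim (fun h => (B h - B 0) / h) (at_right 0) (locally 0) ->
  (forall r, 0 < r < 1 -> ex_derive B r) ->
  (forall r s, 0 < r < 1 -> 0 < s < 1 ->
     r ^ m * (A r * Derive B r - Derive A r * B r) = s ^ m * (A s * Derive B s - Derive A s * B s)) ->
  forall r, 0 < r < 1 -> r ^ m * (A r * Derive B r - Derive A r * B r) = 0.
Proof.
  intros [d2 [Hd2 HA]] HdA HB HBd Hc r Hr.
  set (c := r ^ m * (A r * Derive B r - Derive A r * B r)).
  assert (Hsm : forall eps, 0 < eps -> Rabs c < eps).
  { intros eps He.
    set (M' := Rabs M + 1).
    assert (HM' : 0 < M') by (unfold M'; pose proof (Rabs_pos M); lra).
    set (B0 := Rabs (B 0)).
    assert (HB0 : 0 <= B0) by apply Rabs_pos.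
    set (eta1 := eps / (4 * M')).
    assert (Heta : 0 < eta1) by (unfold eta1; apply Rdiv_lt_0_compat; lra).
    destruct (rq_small B HB 1 Rlt_0_1) as [d1 [Hd1 H1]].
    destruct (HdA (eps / (2 * (B0 + 2)))) as [d3 [Hd3 H3]].
    { apply Rdiv_lt_0_compat; lra. }
    destruct (rq_small B HB eta1 Heta) as [d4 [Hd4 H4]].
    set (h := Rmin (Rmin d1 d2) (Rmin (Rmin d3 d4) 1) / 2).
    assert (Hh : 0 < h /\ h < d1 /\ h < d2 /\ h < d3 /\ h < d4 /\ h < 1).
    { unfold h. pose proof (Rmin_l d1 d2). pose proof (Rmin_r d1 d2).
      pose proof (Rmin_l (Rmin d3 d4) 1). pose proof (Rmin_r (Rmin d3 d4) 1).
      pose proof (Rmin_l d3 d4). pose proof (Rmin_r d3 d4).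
      pose proof (Rmin_l (Rmin d1 d2) (Rmin (Rmin d3 d4) 1)).
      pose proof (Rmin_r (Rmin d1 d2) (Rmin (Rmin d3 d4) 1)).
      assert (0 < Rmin (Rmin d1 d2) (Rmin (Rmin d3 d4) 1)).
      { repeat apply Rmin_pos; lra. }
      lra. }
    destruct (mvt B (Derive B) (h/3) h ltac:(lra)) as [xi [Hxi Emvt]].
    { intros t Ht. apply Derive_correct, HBd. lra. }
    assert (Hxi1 : 0 < xi < 1) by lra.
    unfold c; rewrite (Hc r xi Hr Hxi1).
    pose proof (H4 h ltac:(lra)) as Ha. pose proof (H4 (h/3) ltac:(lra)) as Hb.
    assert (HdB : Rabs (Derive B xi) <= 2 * eta1).
    { assert (Rabs (Derive B xi) * (2 * h / 3) <= eta1 * (4 * h / 3)).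
      { replace (2 * h / 3) with (h - h/3) by field.
        rewrite <- (Rabs_pos_eq (h - h/3)) by lra. rewrite <- Rabs_mult, <- Emvt.
        replace (B h - B (h/3)) with ((B h - B 0) - (B (h/3) - B 0)) by ring.
        eapply Rle_trans; [apply Rabs_triang|]. rewrite Rabs_Ropp. lra. }
      nra. }
    assert (HAx : Rabs (A xi) <= M') by (pose proof (HA xi ltac:(lra)); pose proof (Rle_abs M); unfold M'; lra).
    assert (HBx : Rabs (B xi) <= B0 + 1).
    { pose proof (H1 xi ltac:(lra)). unfold B0.
      replace (B xi) with (B 0 + (B xi - B 0)) by ring.
      eapply Rle_trans; [apply Rabs_triang|]. lra. }
    assert (HdAx : Rabs (Derive A xi) < eps / (2 * (B0 + 2))) by (apply H3; lra).
    assert (Hpow : Rabs (xi ^ m) <= 1).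
    { rewrite Rabs_pos_eq by (apply pow_le; lra). rewrite <- (pow1 m). apply pow_incr; lra. }
    rewrite Rabs_mult.
    assert (Hin : Rabs (A xi * Derive B xi - Derive A xi * B xi) < eps).
    { eapply Rle_lt_trans; [apply Rabs_triang|]. rewrite Rabs_Ropp, !Rabs_mult.
      assert (Rabs (A xi) * Rabs (Derive B xi) <= M' * (2 * eta1)).
      { apply Rmult_le_compat; auto using Rabs_pos. }
      assert (Rabs (Derive A xi) * Rabs (B xi) <= eps / (2 * (B0 + 2)) * (B0 + 1)).
      { apply Rmult_le_compat; auto using Rabs_pos. lra. }
      assert (M' * (2 * eta1) = eps / 2) by (unfold eta1; field; lra).
      assert (eps / (2 * (B0 + 2)) * (B0 + 1) < eps / 2).
      { apply Rmult_lt_reg_r with (2 * (B0 + 2)); [lra|].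
        field_simplify; lra. }
      lra. }
    pose proof (Rabs_pos (xi ^ m)). pose proof (Rabs_pos (A xi * Derive B xi - Derive A xi * B xi)).
    nra. }
  destruct (Req_dec c 0) as [E|E]; auto.
  exfalso. specialize (Hsm (Rabs c) (Rabs_pos_lt _ E)). lra.
Qed.

Lemma om_bdd n p lam u : 0 < p -> radial_solution n p lam u ->
  exists d, 0 < d /\ forall r, 0 < r < d -> Rabs (om p u r) <= 1 + 2 * Rabs (2 / (p + 1)).
Proof.
  intros hp [H01 [Hdd [Hode [Hu0 [Hq0 _]]]]].
  destruct (small0_of _ Hq0 1 Rlt_0_1) as [d [Hd H]].
  exists (Rmin d 1). split; [apply Rmin_pos; lra|].
  intros r Hr. pose proof (Rmin_l d 1). pose proof (Rmin_r d 1).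
  specialize (H r ltac:(lra)). pose proof (H01 r ltac:(lra)) as Hu.
  unfold om. set (k := 2 / (p + 1)).
  eapply Rle_trans; [apply Rabs_triang|].
  eapply Rle_trans; [apply Rplus_le_compat_l, Rle_refl|].
  eapply Rle_trans; [apply Rplus_le_compat_r, Rabs_triang|].
  rewrite Rabs_Ropp, !Rabs_mult, (Rabs_pos_eq r), (Rabs_pos_eq (u r)) by lra.
  pose proof (Rabs_pos k). pose proof (Rabs_pos (Derive u r)).
  assert (r * Rabs (Derive u r) <= 1) by nra.
  assert (Rabs k * u r <= Rabs k) by nra.
  lra.
Qed.

Lemma om_D_small n p lam u : 0 < p -> 0 < lam -> radial_solution n p lam u ->
  small0 (Derive (om p u)).
Proof.
  intros hp hlam hu. pose proof hu as [H01 [Hdd [Hode [Hu0 [Hq0 _]]]]].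
  pose proof (H01 0 ltac:(lra)) as Hu00.
  destruct (rq_small u Hu0 1 Rlt_0_1) as [d1 [Hd1 H1]].
  set (m0 := (1 - u 0) / 2).
  assert (Hm0 : 0 < m0) by (unfold m0; lra).
  set (G0 := / Rpower m0 p).
  assert (HG0 : 0 < G0) by (unfold G0, Rpower; apply Rinv_0_lt_compat, exp_pos).
  set (c1 := 1 - 2/(p+1) - (INR n - 1)).
  intros eps He.
  destruct (small0_of _ Hq0 (eps / (2 * (Rabs c1 + 1)))) as [d2 [Hd2 H2]].
  { apply Rdiv_lt_0_compat; [lra|]. pose proof (Rabs_pos c1); lra. }
  set (d3 := eps / (2 * (lam * G0 + 1))).
  assert (Hd3 : 0 < d3) by (unfold d3; apply Rdiv_lt_0_compat; [lra|]; nra).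
  exists (Rmin (Rmin d1 d2) (Rmin d3 (Rmin m0 1))).
  split; [repeat apply Rmin_pos; lra|].
  intros h Hh.
  pose proof (Rmin_l (Rmin d1 d2) (Rmin d3 (Rmin m0 1))).
  pose proof (Rmin_r (Rmin d1 d2) (Rmin d3 (Rmin m0 1))).
  pose proof (Rmin_l d1 d2). pose proof (Rmin_r d1 d2).
  pose proof (Rmin_l d3 (Rmin m0 1)). pose proof (Rmin_r d3 (Rmin m0 1)).
  pose proof (Rmin_l m0 1). pose proof (Rmin_r m0 1).
  assert (Hh1 : 0 < h < 1) by lra.
  rewrite (om_D n p lam) by auto.
  specialize (H1 h ltac:(lra)). specialize (H2 h ltac:(lra)).
  apply Rabs_le_between in H1.
  assert (Hm : m0 <= 1 - u h) by (unfold m0 in *; lra).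
  assert (Hg : ginv p u h <= G0).
  { unfold ginv, G0. apply Rinv_le_contravar.
    - unfold Rpower; apply exp_pos.
    - apply Rle_Rpower_l; lra. }
  assert (Hg0 : 0 < ginv p u h) by (unfold ginv, Rpower; apply Rinv_0_lt_compat, exp_pos).
  unfold Hf. fold c1.
  eapply Rle_lt_trans; [apply Rabs_triang|]. rewrite Rabs_Ropp, !Rabs_mult.
  rewrite (Rabs_pos_eq lam), (Rabs_pos_eq h), (Rabs_pos_eq (ginv p u h)) by lra.
  assert (Rabs c1 * Rabs (Derive u h) <= (Rabs c1 + 1) * (eps / (2 * (Rabs c1 + 1)))).
  { apply Rmult_le_compat; try apply Rabs_pos; lra. }
  assert ((Rabs c1 + 1) * (eps / (2 * (Rabs c1 + 1))) = eps / 2).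
  { field. pose proof (Rabs_pos c1); lra. }
  assert (lam * (h * ginv p u h) <= lam * (d3 * G0)).
  { apply Rmult_le_compat_l; [lra|]. apply Rmult_le_compat; lra. }
  assert (lam * (d3 * G0) < eps / 2).
  { unfold d3. replace (lam * (eps / (2 * (lam * G0 + 1)) * G0)) with (eps / 2 * (lam * G0 / (lam * G0 + 1))) by (field; nra).
    assert (lam * G0 / (lam * G0 + 1) < 1).
    { apply Rmult_lt_reg_r with (lam * G0 + 1); [nra|]. field_simplify; nra. }
    nra. }
  lra.
Qed.

Lemma lim_scal (F : (R -> Prop) -> Prop) {FF : Filter F} (f : R -> R) c :
  filterlim f F (locally 0) -> filterlim (fun x => c * f x) F (locally 0).
Proof.
  intros H. apply filterlim_locally. intros eps.
  assert (Hc : 0 < Rabs c + 1) by (pose proof (Rabs_pos c); lra).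
  assert (He : 0 < eps / (Rabs c + 1)) by (apply Rdiv_lt_0_compat; [apply cond_pos|lra]).
  apply filter_imp with (2 := proj1 (filterlim_locally f 0) H (mkposreal _ He)).
  intros x Hx. apply (proj1 (ballR _ _ _)) in Hx. apply ballR. simpl in Hx.
  rewrite Rminus_0_r in *. rewrite Rabs_mult.
  pose proof (Rabs_pos c). pose proof (Rabs_pos (f x)).
  apply Rle_lt_trans with ((Rabs c + 1) * Rabs (f x)); [nra|].
  replace (pos eps) with ((Rabs c + 1) * (eps / (Rabs c + 1))) by (field; lra).
  apply Rmult_lt_compat_l; lra.
Qed.

Theorem lemma5p2 (n : nat) (p lam : R) (u : R -> R)
  (hn : (1 <= n)%nat) (hp : 0 < p) (hlam : 0 < lam)
  (hu : radial_solution n p lam u)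
  (hsing : exists w : R -> R, lin_solution n p lam u w /\ nontrivial w) :
  lin_solution n p lam u
    (fun r => r * Derive u r - 2 / (p + 1) * u r + 2 / (p + 1)).
Proof.
  change (lin_solution n p lam u (om p u)).
  split; [intros r Hr; destruct (om_ode n p lam u r hp hu Hr) as [A [B _]]; auto|].
  split; [intros r Hr; apply (om_ode n p lam u r hp hu Hr)|].
  split; [apply (om_at0 n p lam u hp hu)|].
  destruct hsing as [w [[Hw1 [Hw2 [Hw3 Hw4]]] [r0 [Hr0 Hwr0]]]].
  pose proof hu as [H01 [Hdd [Hode [Hu0 [Hq0 _]]]]].
  destruct n as [|m]; [inversion hn|].
  assert (Hs : INR (S m) - 1 = INR m) by (rewrite S_INR; ring).
  set (b := fun r => lam * p / Rpower (1 - u r) (p + 1)).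
  set (W := fun t => t ^ m * (om p u t * Derive w t - Derive (om p u) t * w t)).
  assert (HWd : forall r, 0 < r < 1 -> is_derive W r 0).
  { intros r Hr. destruct (om_ode (S m) p lam u r hp hu Hr) as [A1 [A2 A3]].
    destruct (Hw1 r Hr) as [B1 B2]. pose proof (Hw2 r Hr) as B3.
    rewrite DDn2, Hs in A3, B3.
    apply (wr_deriv m b); auto; lra. }
  assert (HWc : forall r s, 0 < r < 1 -> 0 < s < 1 -> W r = W s).
  { intros r s Hr Hs'. destruct (Rle_or_lt r s) as [Hle|Hlt].
    - destruct (mvt W (fun _ => 0) r s Hle) as [c [Hc E]].
      { intros t Ht. apply HWd. lra. }
      lra.
    - destruct (mvt W (fun _ => 0) s r (Rlt_le _ _ Hlt)) as [c [Hc E]].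
      { intros t Ht. apply HWd. lra. }
      lra. }
  destruct (om_bdd (S m) p lam u hp hu) as [dM HM].
  pose proof (W_zero m (om p u) w _ (ex_intro _ dM HM) (om_D_small (S m) p lam u hp hlam hu) Hw3
     (fun r Hr => proj1 (Hw1 r Hr)) HWc) as HW0.
  set (c := om p u r0 / w r0).
  assert (Hz : forall r, 0 < r < 1 -> om p u r - c * w r = 0).
  { intros r Hr.
    set (lo := Rmin r r0). set (hi := Rmax r r0).
    assert (Hlo : 0 < lo) by (unfold lo; apply Rmin_pos; lra).
    assert (Hhi : hi < 1) by (unfold hi; apply Rmax_lub_lt; lra).
    assert (Hlh : lo <= hi) by (unfold lo, hi; pose proof (Rmin_l r r0); pose proof (Rmax_l r r0); lra).
    destruct (continuity_ab_maj u lo hi Hlh) as [Mx [HMx HMxi]].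
    { intros t Ht. apply continuity_pt_filterlim. apply (ex_derive_continuous u t).
      apply (Hdd t). lra. }
    pose proof (H01 Mx ltac:(lra)) as HuM.
    set (K := Rmax (INR m / lo) (lam * p / Rpower (1 - u Mx) (p + 1))).
    apply (uniq (fun x => om p u x - c * w x)
                (fun x => Derive (om p u) x - c * Derive w x)
                (fun x => Derive (Derive (om p u)) x - c * Derive (Derive w) x)
                (fun x => INR m / x) b lo hi K r0 r).
    - unfold lo, hi; split; [apply Rmin_r|apply Rmax_r].
    - unfold lo, hi; split; [apply Rmin_l|apply Rmax_l].
    - intros x Hx.
      assert (Hx1 : 0 < x < 1) by lra.
      destruct (om_ode (S m) p lam u x hp hu Hx1) as [A1 [A2 A3]].
      destruct (Hw1 x Hx1) as [B1 B2]. pose proof (Hw2 x Hx1) as B3.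
      rewrite DDn2, Hs in A3, B3.
      split; [|split; [|split; [|split]]].
      + auto_derive.
        * repeat split; auto.
        * change (Derive (fun x => om p u x) x) with (Derive (om p u) x).
          change (Derive (fun x => w x) x) with (Derive w x). ring.
      + auto_derive.
        * repeat split; auto.
        * change (Derive (fun x => Derive (om p u) x) x) with (Derive (Derive (om p u)) x).
          change (Derive (fun x => Derive w x) x) with (Derive (Derive w) x). ring.
      + assert (EA : Derive (Derive (om p u)) x = - (INR m / x * Derive (om p u) x) - b x * om p u x) by (unfold b; lra).
        assert (EB : Derive (Derive w) x = - (INR m / x * Derive w x) - b x * w x) by (unfold b; lra).
        simpl. rewrite EA, EB. ring.
      + unfold K. eapply Rle_trans; [|apply Rmax_l].
        pose proof (pos_INR m).
        rewrite Rabs_pos_eq by (apply Rdiv_le_0_compat; lra).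
        unfold Rdiv. apply Rmult_le_compat_l; auto.
        apply Rinv_le_contravar; lra.
      + unfold K. eapply Rle_trans; [|apply Rmax_r].
        pose proof (H01 x ltac:(lra)) as Hux.
        assert (HP1 : 0 < Rpower (1 - u Mx) (p + 1)) by (unfold Rpower; apply exp_pos).
        assert (HP2 : 0 < Rpower (1 - u x) (p + 1)) by (unfold Rpower; apply exp_pos).
        unfold b. rewrite Rabs_pos_eq.
        * unfold Rdiv. apply Rmult_le_compat_l; [nra|].
          apply Rinv_le_contravar; auto. apply Rle_Rpower_l; [lra|].
          pose proof (HMx x Hx). lra.
        * apply Rdiv_le_0_compat; nra.
    - unfold c. field. exact Hwr0.
    - pose proof (HW0 r0 Hr0) as E. unfold W in E.
      assert (Hp0 : r0 ^ m <> 0) by (apply pow_nonzero; lra).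
      assert (E2 : om p u r0 * Derive w r0 - Derive (om p u) r0 * w r0 = 0).
      { apply Rmult_integral in E. destruct E; [contradiction|assumption]. }
      unfold c. apply Rmult_eq_reg_r with (w r0); auto.
      rewrite Rmult_0_l. field_simplify; [|exact Hwr0]. lra. }
  apply filterlim_ext_loc with (fun x => c * w x).
  - exists (mkposreal 1 Rlt_0_1). intros y Hb Hy.
    apply (proj1 (ballR _ _ _)) in Hb. simpl in Hb. apply Rabs_lt_between in Hb.
    pose proof (Hz y ltac:(lra)). lra.
  - apply lim_scal; auto. apply Proper_StrongProper, at_left_proper_filter.
Qed.
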